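(* Let $T>0$, $N=2$, $M=2$. Consider minimizing $\mathbb V(T)=\frac12(\xi_1(T)^2+\xi_2(T)^2)$ over $\alpha\in\mathcal U_2$, where $\dot\xi_i=-\xi_i+(1-\alpha_i)\bar\xi$, $\bar\xi=\frac12(\xi_1+\xi_2)$, with $\bar\xi(0)>0$ and $\xi_1(0)>\xi_2(0)$. Let $\alpha$ be an optimal control whose trajectory satisfies $\xi_1(t)\ge\xi_2(t)$ for all $t$, and let $(\lambda_1,\lambda_2)$ be the corresponding covectors given by the Pontryagin maximum principle: $$\dot\lambda_1=\tfrac{1+\alpha_1}{2}\lambda_1-\tfrac{1-\alpha_2}{2}\lambda_2,\quad \dot\lambda_2=\tfrac{1+\alpha_2}{2}\lambda_2-\tfrac{1-\alpha_1}{2}\lambda_1,\quad \lambda(T)=(\xi_1(T),\xi_2(T)),$$ and for almost every $t$, $\alpha(t)$ minimizes $a\mapsto-\bar\xi(t)(a_1\lambda_1(t)+a_2\lambda_2(t))$ over $a\in[0,1]^2$, $a_1+a_2\le2$. Then: (i) if $\lambda_2(T)>0$, then $\lambda_1(t)>0$ and $\lambda_2(t)>0$ for all $t\in[0,T]$; (ii) if $\lambda_2(T)=0$, then $\lambda_1(t)>0$ and $\lambda_2(t)=0$ for all $t\in[0,T]$; (iii) if $\lambda_2(T)<0$, then $\lambda_2(t)<0$ for all $t\in[0,T]$.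
   Context: $\mathcal U_2$ is the set of measurable $\alpha:[0,T]\to[0,1]^2$ with $\alpha_1+\alpha_2\le2$. *)

(* Defs.v *)
From HB Require Import structures.
From mathcomp Require Import all_boot all_order all_algebra.
From mathcomp Require Import all_classical all_reals all_analysis.
Set Implicit Arguments. Unset Strict Implicit. Unset Printing Implicit Defensive.
Import Order.TTheory GRing.Theory Num.Theory.
Import numFieldNormedType.Exports.
Local Open Scope classical_set_scope.
Local Open Scope ring_scope.

(* Controls alpha = (a1, a2) : [0,T] -> [0,1]^2 with a1 + a2 <= 2, measurable
   (the set U_2). Functions are defined on R; only their values on [0,T] matter. *)
Definition admissible (R : realType) (T : R) (a1 a2 : R -> R) : Prop :=
  measurable_fun `[0, T] a1 /\ measurable_fun `[0, T] a2 /\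
  (forall t, t \in `[0, T] ->
     0 <= a1 t <= 1 /\ 0 <= a2 t <= 1 /\ a1 t + a2 t <= 2).

Definition xibar (R : realType) (x1 x2 : R -> R) (t : R) : R :=
  (x1 t + x2 t) / 2.

(* (x1, x2) is a (Caratheodory / absolutely continuous) solution on [0,T] of
   dx_i/dt = - x_i + (1 - a_i) xbar, written in integral form. *)
Definition trajectory (R : realType) (T : R) (a1 a2 x1 x2 : R -> R) : Prop :=
  {within `[0, T], continuous x1} /\ {within `[0, T], continuous x2} /\
  (forall t, t \in `[0, T] ->
     x1 t = x1 0 + \int[lebesgue_measure]_(s in `[0, t])
                     (- x1 s + (1 - a1 s) * xibar x1 x2 s)) /\
  (forall t, t \in `[0, T] ->
     x2 t = x2 0 + \int[lebesgue_measure]_(s in `[0, t])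
                     (- x2 s + (1 - a2 s) * xibar x1 x2 s)).

Definition cost (R : realType) (T : R) (x1 x2 : R -> R) : R :=
  (x1 T ^+ 2 + x2 T ^+ 2) / 2.

Definition optimal (R : realType) (T : R) (a1 a2 x1 x2 : R -> R) : Prop :=
  admissible T a1 a2 /\ trajectory T a1 a2 x1 x2 /\
  forall b1 b2 y1 y2 : R -> R, admissible T b1 b2 -> trajectory T b1 b2 y1 y2 ->
    y1 0 = x1 0 -> y2 0 = x2 0 -> cost T x1 x2 <= cost T y1 y2.

Definition costate (R : realType) (T : R) (a1 a2 x1 x2 l1 l2 : R -> R) : Prop :=
  {within `[0, T], continuous l1} /\ {within `[0, T], continuous l2} /\
  (forall t, t \in `[0, T] ->
     l1 t = l1 0 + \int[lebesgue_measure]_(s in `[0, t])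
                ((1 + a1 s) / 2 * l1 s - (1 - a2 s) / 2 * l2 s)) /\
  (forall t, t \in `[0, T] ->
     l2 t = l2 0 + \int[lebesgue_measure]_(s in `[0, t])
                ((1 + a2 s) / 2 * l2 s - (1 - a1 s) / 2 * l1 s)) /\
  l1 T = x1 T /\ l2 T = x2 T.

Definition pmp_min (R : realType) (T : R) (a1 a2 x1 x2 l1 l2 : R -> R) : Prop :=
  {ae (@lebesgue_measure R), forall t, t \in `[0, T] ->
     forall b1 b2 : R, 0 <= b1 <= 1 -> 0 <= b2 <= 1 -> b1 + b2 <= 2 ->
       - xibar x1 x2 t * (a1 t * l1 t + a2 t * l2 t)
       <= - xibar x1 x2 t * (b1 * l1 t + b2 * l2 t)}.

(* Main.v *)
Require Import Defs.
From HB Require Import structures.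
From mathcomp Require Import all_boot all_order all_algebra.
From mathcomp Require Import all_classical all_reals all_analysis.
From mathcomp Require Import ring lra measurable_realfun.
Import Order.TTheory GRing.Theory Num.Theory.
Import numFieldNormedType.Exports.
Local Open Scope classical_set_scope.
Local Open Scope ring_scope.
Set Implicit Arguments.

Lemma cont_pos (R : realType) (f : R -> R) (c d x : R) :
  {within `[c,d], continuous f} -> x \in `[c,d] -> 0 < f x ->
  exists2 e, 0 < e & forall y, y \in `[c,d] -> `|x - y| < e -> 0 < f y.
Proof.
move=> /subspace_continuousP cf xcd fx0.
have := cf x xcd.
move/cvgrPdist_lt => /(_ _ fx0).
rewrite near_withinE => /nbhs_ballP[e e0 He].
exists e => // y ycd xy.
have h := He y xy ycd; rewrite /from_subspace in h.
have := ler_norm (f x - f y). lra.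
Qed.

Lemma last_zero (R : realType) (f : R -> R) (c d p : R) :
  {within `[c,d], continuous f} -> c <= p -> p <= d -> f p <= 0 -> 0 < f d ->
  exists t0, [/\ c <= t0, t0 < d, f t0 = 0 &
                 forall s, t0 < s -> s <= d -> 0 < f s].
Proof.
move=> cf cp pd fp fd.
pose S := [set t | c <= t /\ t <= d /\ f t <= 0].
have Sp : S p by [].
have hs : has_sup S by split; [exists p | exists d => t [_ []]].
have pt0 : p <= sup S by apply: sup_upper_bound.
have t0d : sup S <= d by apply: ge_sup; [exists p | move=> t [_ []]].
have A : forall s, sup S < s -> s <= d -> 0 < f s.
  move=> s lts sd; rewrite ltNge; apply/negP => fs.
  have : S s by split; [lra | split].
  move/(sup_upper_bound hs) => /= h; lra.
have B : f (sup S) <= 0.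
  rewrite leNgt; apply/negP => fpos.
  have t0cd : sup S \in `[c, d] by rewrite in_itv /=; apply/andP; split; lra.
  have [e e0 He] := @cont_pos _ _ _ _ _ cf t0cd fpos.
  have [s [cs [sd fs]] ls] := sup_adherent e0 hs.
  have ss : s <= sup S by apply: sup_upper_bound.
  have : 0 < f s.
    apply: He; first by rewrite in_itv /=; apply/andP; split.
    rewrite ger0_norm; lra.
  lra.
have t0lt : sup S < d.
  rewrite lt_neqAle t0d andbT; apply/negP => /eqP e; rewrite e in B; lra.
have cf' : {within `[sup S, d], continuous f}.
  apply: continuous_subspaceW cf => t /=; rewrite !in_itv /= => /andP[h1 h2].
  apply/andP; split; lra.
have [|z zI fz] := IVT (v := 0) (ltW t0lt) cf'.
  apply/andP; split; [rewrite ge_min B //| rewrite le_max (ltW fd) orbT //].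
move: zI; rewrite in_itv /= => /andP[z1 z2].
exists (sup S); split => //; first lra.
have : z <= sup S.
  rewrite leNgt; apply/negP => h; have := A z h z2; lra.
move=> h; have -> : sup S = z by apply/le_anti; rewrite h z1.
by [].
Qed.

Lemma within_norm (R : realType) (f : R -> R) (A : set R) :
  {within A, continuous f} -> {within A, continuous (fun x => `|f x|)}.
Proof.
move=> cf x; apply: (continuous_comp (cf x)); exact: norm_continuous.
Qed.

Lemma zp (R : realType) (f : R -> R) (c d K : R) :
  c <= d -> 0 <= K -> {within `[c,d], continuous f} ->
  (forall t u M, c <= t -> t <= u -> u <= d ->
     (forall s, t <= s -> s <= u -> `|f s| <= M) -> `|f u - f t| <= K*(u-t)*M) ->
  forall p, c <= p -> p <= d -> f p = 0 -> forall x, c <= x -> x <= d -> f x = 0.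
Proof.
move=> cd K0 cf H p cp pd fp.
pose del := (2 * K + 2)^-1.
have del0 : 0 < del by rewrite invr_gt0; lra.
have Kdel : K * del <= 1/2.
  rewrite /del ler_pdivrMr; lra.
have local : forall q, c <= q -> q <= d -> f q = 0 ->
    forall x, c <= x -> x <= d -> `|x - q| <= del -> f x = 0.
  move=> q cq qd fq x cx xd xq.
  pose a := Num.max c (q - del); pose b := Num.min d (q + del).
  have ab : a <= b by rewrite /a /b ge_max !le_min; apply/andP; split;
    apply/andP; split; lra.
  have ca : c <= a by rewrite /a le_max lexx.
  have bd : b <= d by rewrite /b ge_min lexx.
  have cf' : {within `[a, b], continuous (fun x => `|f x|)}.
    apply: within_norm; apply: continuous_subspaceW cf => t /=.
    rewrite !in_itv /= => /andP[h1 h2]; apply/andP; split; lra.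
  have [m mab mmax] := EVT_max ab cf'.
  move: mab; rewrite in_itv /= => /andP[am mb].
  have amq : q - del <= m by move: am; rewrite /a ge_max => /andP[].
  have bmq : m <= q + del by move: mb; rewrite /b le_min => /andP[].
  have qa : a <= q by rewrite /a ge_max; apply/andP; split; lra.
  have qb : q <= b by rewrite /b le_min; apply/andP; split; lra.
  have Mb : forall s, a <= s -> s <= b -> `|f s| <= `|f m|.
    by move=> s s1 s2; apply: mmax; rewrite in_itv /=; apply/andP; split.
  have M0 : `|f m| = 0.
    apply/eqP; rewrite eq_le normr_ge0 andbT.
    have [mq|qm] := leP m q.
    - have := H m q `|f m| (le_trans ca am) mq qd.
      rewrite fq sub0r normrN => /(_ _).
      have hh : `|f m| <= K * (q - m) * `|f m|.
        apply: (le_trans _ (H m q `|f m| (le_trans ca am) mq qd _)).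
          by rewrite fq sub0r normrN.
        by move=> s s1 s2; apply: Mb; lra.
      move=> _.
      have : K * (q - m) <= 1/2.
        apply: le_trans Kdel; apply: ler_wpM2l => //; lra.
      move=> h; have fm0 := normr_ge0 (f m). nra.
    - have hh : `|f m| <= K * (m - q) * `|f m|.
        apply: (le_trans _ (H q m `|f m| cq (ltW qm) (le_trans mb bd) _)).
          by rewrite fq subr0.
        by move=> s s1 s2; apply: Mb; lra.
      have : K * (m - q) <= 1/2.
        apply: le_trans Kdel; apply: ler_wpM2l => //; lra.
      move=> h; have fm0 := normr_ge0 (f m). nra.
  have ax : a <= x.
    rewrite /a ge_max; apply/andP; split => //.
    move: xq; rewrite ler_norml; lra.
  have xb : x <= b.
    rewrite /b le_min; apply/andP; split => //.
    move: xq; rewrite ler_norml; lra.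
  by apply/normr0_eq0; apply/eqP; rewrite eq_le normr_ge0 andbT -M0 Mb.
have ind : forall n : nat, forall x, c <= x -> x <= d ->
    `|x - p| <= n%:R * del -> f x = 0.
  elim=> [|n IH] x cx xd.
    rewrite mul0r => h; have : x - p = 0 by apply/normr0_eq0/eqP;
      rewrite eq_le h normr_ge0.
    move=> e; have -> : x = p by lra.
    by [].
  move=> hx.
  pose k : R := n%:R.
  have k0 : 0 <= k by rewrite /k ler0n.
  have hk : (n.+1)%:R = k + 1 by rewrite /k -natr1.
  rewrite hk in hx.
  pose y := (p + k * x) / (k + 1).
  have ey : y * (k + 1) = p + k * x by rewrite /y mulfVK //; lra.
  have yp : (y - p) * (k + 1) = k * (x - p) by lra.
  have xy : (x - y) * (k + 1) = x - p by lra.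
  have cy : c <= y.
    have : c * (k + 1) <= y * (k + 1) by rewrite ey; nra.
    by rewrite ler_pM2r; lra.
  have yd : y <= d.
    have : y * (k + 1) <= d * (k + 1) by rewrite ey; nra.
    by rewrite ler_pM2r; lra.
  have fy : f y = 0.
    apply: IH => //.
    have hk1 : `|k + 1| = k + 1 by rewrite ger0_norm; lra.
    have e1 : `|y - p| * (k + 1) = k * `|x - p|.
      by rewrite -hk1 -normrM yp normrM ger0_norm.
    have : `|y - p| * (k + 1) <= k * del * (k + 1).
      rewrite e1; have := normr_ge0 (x - p); nra.
    by rewrite ler_pM2r; lra.
  apply: (local y cy yd fy x cx xd).
  have hk1 : `|k + 1| = k + 1 by rewrite ger0_norm; lra.
  have : `|x - y| * (k + 1) <= del * (k + 1).
    by rewrite -{1}hk1 -normrM xy; lra.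
  by rewrite ler_pM2r; lra.
move=> x cx xd.
pose n := Num.truncn ((d - c) / del).
apply: (ind n.+1) => //.
have h1 := truncnS_gt ((d - c) / del).
have : (d - c) / del * del = d - c by rewrite mulfVK //; lra.
have : `|x - p| <= d - c by rewrite ler_norml; apply/andP; split; lra.
nra.
Qed.

Section S.
Variable R : realType.
Notation mu := (@lebesgue_measure R).

Lemma int_abs_bound (g h : R -> R) (c d K M t u : R) :
  0 <= K -> c <= t -> t <= u -> u <= d ->
  mu.-integrable `]t, u] (EFin \o g) ->
  {ae mu, forall s, s \in `]c, d] -> `|g s| <= K * `|h s|} ->
  (forall s, t <= s -> s <= u -> `|h s| <= M) ->
  \int[mu]_(s in `]t, u]) `|g s| <= K * (u - t) * M.
Proof.
move=> K0 ct tu ud ig Hae hM.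
have M0 : 0 <= M by apply: le_trans (hM t (lexx t) tu); exact: normr_ge0.
have mI : measurable (`]t, u] : set R) by [].
have E : forall x, x = lebesgue_measure [set` `]t, u]] -> x = (u - t)%:E.
  move=> x ->; rewrite lebesgue_measure_itv /=.
  have [tu'|] := ltP t u.
    by rewrite /= lte_fin tu' /=.
  move=> ut; have -> : u = t by apply/le_anti; rewrite tu ut.
  by rewrite /= ltxx /= subrr.
have -> : K * (u - t) * M = \int[mu]_(s in `]t, u]) (K * M).
  rewrite Rintegral_cst //; set m := (X in fine X); rewrite (E m erefl) /=; lra.
rewrite /Rintegral; apply: fine_le.
- rewrite ge0_fin_numE; last by apply: integral_ge0 => x _; rewrite lee_fin.
  by move/integrableP: ig => [_]; under eq_integral do rewrite /= -abse_EFin.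
- by rewrite integral_cst //; set m := (X in (_ * X)%E); rewrite (E m erefl).
- apply: ae_ge0_le_integral.
  + exact: measurable_itv.
  + by move=> x _; change (0%:E <= `|g x|%:E)%E; rewrite lee_fin.
  + apply/measurable_EFinP; apply: measurableT_comp => //.
    by move/integrableP: ig => [/measurable_EFinP].
  + by move=> x _; change (0%:E <= (K * M)%:E)%E; rewrite lee_fin; nra.
  + by [].
  + have FF := @ae_filter_ringOfSetsType _ _ R mu.
    apply: (filterS _ Hae) => s Hs; rewrite /= in_itv /= => /andP[ts su].
    rewrite lee_fin; apply: le_trans (Hs _) _.
      by rewrite in_itv /=; apply/andP; split; lra.
    apply: ler_wpM2l => //; apply: hM; lra.
Qed.

Lemma int_bound (g h : R -> R) (c d K M t u : R) :
  0 <= K -> c <= t -> t <= u -> u <= d ->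
  mu.-integrable `]t, u] (EFin \o g) ->
  {ae mu, forall s, s \in `]c, d] -> `|g s| <= K * `|h s|} ->
  (forall s, t <= s -> s <= u -> `|h s| <= M) ->
  `|\int[mu]_(s in `]t, u]) g s| <= K * (u - t) * M.
Proof.
move=> K0 ct tu ud ig Hae hM.
have H1 := @int_abs_bound g h c d K M t u K0 ct tu ud ig Hae hM.
have H2 : `|\int[mu]_(s in `]t, u]) g s| <= \int[mu]_(s in `]t, u]) `|g s|.
  by apply: le_normr_Rintegral => //; exact: measurable_itv.
exact: (le_trans H2 H1).
Qed.

Lemma incr (f g : R -> R) (T t u : R) :
  mu.-integrable `[0, T] (EFin \o g) ->
  (forall t, t \in `[0, T] -> f t = f 0 + \int[mu]_(s in `[0, t]) g s) ->
  0 <= t -> t <= u -> u <= T ->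
  f u - f t = \int[mu]_(s in `]t, u]) g s.
Proof.
move=> ig hf t0 tu uT.
rewrite (hf u); last by rewrite in_itv /=; apply/andP; split; lra.
rewrite (hf t); last by rewrite in_itv /=; apply/andP; split; lra.
have -> : f 0 + \int[mu]_(s in `[0, u]) g s - (f 0 + \int[mu]_(s in `[0, t]) g s)
  = \int[mu]_(s in `[0, u]) g s - \int[mu]_(s in `[0, t]) g s by ring.
apply: (@Rintegral_itvB _ g (BLeft 0) (BRight u) t).
- apply: integrableS ig => //; apply: subset_itvl; rewrite bnd_simp; lra.
- by rewrite bnd_simp.
- by rewrite bnd_simp.
Qed.

Lemma integ (g : R -> R) (T B : R) :
  measurable_fun `[0, T] g -> (forall s, s \in `[0, T] -> `|g s| <= B) ->
  mu.-integrable `[0, T] (EFin \o g).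
Proof.
move=> mg gB; apply: measurable_bounded_integrable => //.
- have E : forall x, x = lebesgue_measure [set` `[0, T]] -> (x < +oo)%E.
    by move=> x ->; rewrite lebesgue_measure_itv /=; case: ifP => // _; rewrite -EFinD ltry.
  exact: (E _ erefl).
- exists B; split; first exact: num_real.
  move=> M BM x /= xT.
  by apply: le_trans (gB x xT) _; apply: ltW.
Qed.

Definition ode (T : R) (F G : R -> R) :=
  mu.-integrable `[0, T] (EFin \o G) /\
  forall t u, 0 <= t -> t <= u -> u <= T ->
    F u - F t = \int[mu]_(s in `]t, u]) G s.

Lemma ode_of (T : R) (F G : R -> R) :
  mu.-integrable `[0, T] (EFin \o G) ->
  (forall t, t \in `[0, T] -> F t = F 0 + \int[mu]_(s in `[0, t]) G s) ->
  ode T F G.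
Proof. by move=> ig hf; split => // t u t0 tu uT; exact: (@incr F G T t u ig hf). Qed.

Lemma ode_sub_int (T : R) (G : R -> R) (t u : R) :
  mu.-integrable `[0, T] (EFin \o G) -> 0 <= t -> u <= T ->
  mu.-integrable `]t, u] (EFin \o G).
Proof.
move=> ig t0 uT; apply: integrableS ig => //.
move=> x /=; rewrite !in_itv /= => /andP[h1 h2]; apply/andP; split; lra.
Qed.

Lemma odeB (T : R) (F1 G1 F2 G2 : R -> R) :
  ode T F1 G1 -> ode T F2 G2 ->
  ode T (fun s => F1 s - F2 s) (fun s => G1 s - G2 s).
Proof.
move=> [i1 h1] [i2 h2]; split.
  apply: (eq_integrable _ _ _ _ (integrableB _ i1 i2)).
  - exact: measurable_itv.
  - by move=> x _; rewrite /= EFinB.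
  - exact: measurable_itv.
move=> t u t0 tu uT.
have -> : F1 u - F2 u - (F1 t - F2 t) = (F1 u - F1 t) - (F2 u - F2 t) by ring.
rewrite h1 // h2 //; symmetry; apply: RintegralB.
- exact: measurable_itv.
- exact: (@ode_sub_int T G1 t u i1 t0 uT).
- exact: (@ode_sub_int T G2 t u i2 t0 uT).
Qed.

Lemma odeD (T : R) (F1 G1 F2 G2 : R -> R) :
  ode T F1 G1 -> ode T F2 G2 ->
  ode T (fun s => F1 s + F2 s) (fun s => G1 s + G2 s).
Proof.
move=> [i1 h1] [i2 h2]; split.
  apply: (eq_integrable _ _ _ _ (integrableD _ i1 i2)).
  - exact: measurable_itv.
  - by move=> x _; rewrite /= EFinD.
  - exact: measurable_itv.
move=> t u t0 tu uT.
have -> : F1 u + F2 u - (F1 t + F2 t) = (F1 u - F1 t) + (F2 u - F2 t) by ring.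
rewrite h1 // h2 //; symmetry; apply: RintegralD.
- exact: measurable_itv.
- exact: (@ode_sub_int T G1 t u i1 t0 uT).
- exact: (@ode_sub_int T G2 t u i2 t0 uT).
Qed.

Lemma zp_ode (T : R) (F G : R -> R) (c d K : R) :
  ode T F G -> 0 <= c -> c <= d -> d <= T -> 0 <= K ->
  {within `[c, d], continuous F} ->
  {ae mu, forall s, s \in `]c, d] -> `|G s| <= K * `|F s|} ->
  forall p, c <= p -> p <= d -> F p = 0 -> forall x, c <= x -> x <= d -> F x = 0.
Proof.
move=> [ig hF] c0 cd dT K0 cF Hae.
apply: (@zp R F c d K cd K0 cF) => t u M ct tu ud hM.
rewrite hF //; try lra.
apply: (@int_bound G F c d K M t u K0 ct tu ud _ Hae hM).
apply: (@ode_sub_int T G t u ig); lra.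
Qed.
End S.
Arguments ode {R} T F G.

Lemma csub (R : realType) (f : R -> R) (a b c d : R) :
  {within `[a, b], continuous f} -> a <= c -> d <= b ->
  {within `[c, d], continuous f}.
Proof.
move=> cf ac db; apply: continuous_subspaceW cf => t /=.
rewrite !in_itv /= => /andP[h1 h2]; apply/andP; split; lra.
Qed.

Lemma cD (R : realType) (f g : R -> R) (A : set R) :
  {within A, continuous f} -> {within A, continuous g} ->
  {within A, continuous (fun s => f s + g s)}.
Proof. by move=> cf cg x; apply: continuousD; [exact: cf|exact: cg]. Qed.

Lemma cB (R : realType) (f g : R -> R) (A : set R) :
  {within A, continuous f} -> {within A, continuous g} ->
  {within A, continuous (fun s => f s - g s)}.
Proof. by move=> cf cg x; apply: continuousB; [exact: cf|exact: cg]. Qed.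

Lemma cN (R : realType) (f : R -> R) (A : set R) :
  {within A, continuous f} -> {within A, continuous (fun s => - f s)}.
Proof. by move=> cf x; apply: continuousN; exact: cf. Qed.

Lemma cMin (R : realType) (f g : R -> R) (A : set R) :
  {within A, continuous f} -> {within A, continuous g} ->
  {within A, continuous (fun s => Num.min (f s) (g s))}.
Proof. by move=> cf cg x; apply: continuous_min; [exact: cf|exact: cg]. Qed.

Lemma cbound (R : realType) (f : R -> R) (T : R) :
  {within `[0, T], continuous f} -> 0 <= T ->
  exists B, forall s, s \in `[0, T] -> `|f s| <= B.
Proof.
move=> cf T0; have [m _ hm] := EVT_max T0 (@within_norm R f _ cf).
by exists `|f m|.
Qed.

Lemma cmeas (R : realType) (f : R -> R) (T : R) :
  {within `[0, T], continuous f} -> measurable_fun `[0, T] f.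
Proof. by move=> cf; apply: subspace_continuous_measurable_fun. Qed.

Lemma nbound (R : realType) (c y B : R) :
  0 <= c -> c <= 1 -> `|y| <= B -> `|c * y| <= B.
Proof.
move=> c0 c1 yB; rewrite normrM (ger0_norm c0).
have := normr_ge0 y; nra.
Qed.

Lemma ivt_up (R : realType) (f : R -> R) (a b : R) :
  a <= b -> {within `[a, b], continuous f} -> f a <= 0 -> 0 <= f b ->
  exists z, [/\ a <= z, z <= b & f z = 0].
Proof.
move=> ab cf fa fb.
have [|z zI fz] := IVT (v := 0) ab cf.
  by apply/andP; split; [rewrite ge_min fa | rewrite le_max fb orbT].
by move: zI; rewrite in_itv /= => /andP[h1 h2]; exists z.
Qed.

Lemma ivt_down (R : realType) (f : R -> R) (a b : R) :
  a <= b -> {within `[a, b], continuous f} -> 0 <= f a -> f b <= 0 ->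
  exists z, [/\ a <= z, z <= b & f z = 0].
Proof.
move=> ab cf fa fb.
have [|z zI fz] := IVT (v := 0) ab cf.
  by apply/andP; split; [rewrite ge_min fb orbT | rewrite le_max fa].
by move: zI; rewrite in_itv /= => /andP[h1 h2]; exists z.
Qed.

Lemma meas_g (R : realType) (T : R) (a b l m : R -> R) :
  measurable_fun `[0, T] a -> measurable_fun `[0, T] b ->
  measurable_fun `[0, T] l -> measurable_fun `[0, T] m ->
  measurable_fun `[0, T] (fun s => (1 + a s) / 2 * l s - (1 - b s) / 2 * m s).
Proof.
move=> ma mb ml mm.
apply: (measurable_funB (f := (fun s => (1 + a s) / 2 * l s)) (g := (fun s => (1 - b s) / 2 * m s))).
- apply: (measurable_funM (f := (fun s => (1 + a s) / 2)) (g := l)) => //.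
  apply: (measurable_funM (f := (fun s => 1 + a s)) (g := (fun=> 2^-1))) => //.
  by apply: (measurable_funD (f := (fun=> 1)) (g := a)).
- apply: (measurable_funM (f := (fun s => (1 - b s) / 2)) (g := m)) => //.
  apply: (measurable_funM (f := (fun s => 1 - b s)) (g := (fun=> 2^-1))) => //.
  by apply: (measurable_funB (f := (fun=> 1)) (g := b)).
Qed.

Lemma meas_h (R : realType) (T : R) (a z x y : R -> R) :
  measurable_fun `[0, T] a -> measurable_fun `[0, T] z ->
  measurable_fun `[0, T] x ->
  measurable_fun `[0, T] y ->
  measurable_fun `[0, T] (fun s => - z s + (1 - a s) * xibar x y s).
Proof.
move=> ma mz mx my.
have -> : (fun s => - z s + (1 - a s) * xibar x y s) =
  (fun s => (1 - a s) * xibar x y s - z s).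
  by apply: funext => s; rewrite addrC.
apply: (measurable_funB (f := (fun s => (1 - a s) * xibar x y s)) (g := z)) => //.
- apply: (measurable_funM (f := (fun s => 1 - a s)) (g := (xibar x y))) => //.
    by apply: (measurable_funB (f := (fun=> 1)) (g := a)).
  rewrite /xibar.
  apply: (measurable_funM (f := (fun s => x s + y s)) (g := (fun=> 2^-1))) => //.
  by apply: (measurable_funD (f := x) (g := y)).
Qed.

Unset Implicit Arguments.

Theorem proposition6 (R : realType) (T : R) (a1 a2 x1 x2 l1 l2 : R -> R) :
  0 < T ->
  0 < xibar x1 x2 0 ->
  x2 0 < x1 0 ->
  optimal T a1 a2 x1 x2 ->
  (forall t, t \in `[0, T] -> x2 t <= x1 t) ->
  costate T a1 a2 x1 x2 l1 l2 ->
  pmp_min T a1 a2 x1 x2 l1 l2 ->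
  [/\ (0 < l2 T -> forall t, t \in `[0, T] -> 0 < l1 t /\ 0 < l2 t),
      (l2 T = 0 -> forall t, t \in `[0, T] -> 0 < l1 t /\ l2 t = 0) &
      (l2 T < 0 -> forall t, t \in `[0, T] -> l2 t < 0)].
Proof.
move=> T0 xb0 x21 [[ma1 [ma2 abnd]] [[cx1 [cx2 [ex1 ex2]]] _]] x2x1
  [cl1 [cl2 [el1 [el2 [l1T l2T]]]]] pmp.
have inI : forall s, 0 <= s -> s <= T -> s \in `[0, T].
  by move=> s h1 h2; rewrite in_itv /= h1 h2.
have outI : forall s, s \in `[0, T] -> 0 <= s /\ s <= T.
  by move=> s; rewrite in_itv /= => /andP.
have [B1 hB1] := @cbound R l1 T cl1 (ltW T0).
have [B2 hB2] := @cbound R l2 T cl2 (ltW T0).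
have [C1 hC1] := @cbound R x1 T cx1 (ltW T0).
have [C2 hC2] := @cbound R x2 T cx2 (ltW T0).
have ab : forall s, s \in `[0, T] ->
    [/\ 0 <= a1 s, a1 s <= 1, 0 <= a2 s & a2 s <= 1].
  move=> s sI; have [/andP[h1 h2] [/andP[h3 h4] _]] := abnd s sI.
  by split.
pose g1 := fun s => (1 + a1 s) / 2 * l1 s - (1 - a2 s) / 2 * l2 s.
pose g2 := fun s => (1 + a2 s) / 2 * l2 s - (1 - a1 s) / 2 * l1 s.
pose h1 := fun s => - x1 s + (1 - a1 s) * xibar x1 x2 s.
pose h2 := fun s => - x2 s + (1 - a2 s) * xibar x1 x2 s.
have ml1 := @cmeas R l1 T cl1; have ml2 := @cmeas R l2 T cl2.
have mx1 := @cmeas R x1 T cx1; have mx2 := @cmeas R x2 T cx2.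
have od1 : ode T l1 g1.
  apply: ode_of => //; apply: (@integ R g1 T (B1 + B2)).
    exact: meas_g.
  move=> s sI; have [h1' h2' h3' h4'] := ab s sI; rewrite /g1.
  apply: le_trans (ler_normB _ _) _; apply: lerD; apply: nbound;
    [lra|lra|exact: hB1|lra|lra|exact: hB2].
have od2 : ode T l2 g2.
  apply: ode_of => //; apply: (@integ R g2 T (B2 + B1)).
    exact: meas_g.
  move=> s sI; have [h1' h2' h3' h4'] := ab s sI; rewrite /g2.
  apply: le_trans (ler_normB _ _) _; apply: lerD; apply: nbound;
    [lra|lra|exact: hB2|lra|lra|exact: hB1].
have hxb : forall s, s \in `[0, T] -> `|xibar x1 x2 s| <= C1 + C2.
  move=> s sI; rewrite /xibar mulrC; apply: nbound; [lra|lra|].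
  apply: le_trans (ler_normD _ _) _; apply: lerD; [exact: hC1|exact: hC2].
have ox1 : ode T x1 h1.
  apply: ode_of => //; apply: (@integ R h1 T (C1 + (C1 + C2))).
    exact: meas_h.
  move=> s sI; have [h1' h2' h3' h4'] := ab s sI; rewrite /h1.
  apply: le_trans (ler_normD _ _) _; apply: lerD.
    by rewrite normrN; exact: hC1.
  apply: nbound; [lra|lra|exact: hxb].
have ox2 : ode T x2 h2.
  apply: ode_of => //; apply: (@integ R h2 T (C2 + (C1 + C2))).
    exact: meas_h.
  move=> s sI; have [h1' h2' h3' h4'] := ab s sI; rewrite /h2.
  apply: le_trans (ler_normD _ _) _; apply: lerD.
    by rewrite normrN; exact: hC2.
  apply: nbound; [lra|lra|exact: hxb].
have FF := @ae_filter_ringOfSetsType _ _ R (@lebesgue_measure R).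
have Spos : forall s, s \in `[0, T] -> 0 < x1 s + x2 s.
  have oS := odeD ox1 ox2.
  have cS : {within `[0, T], continuous (fun s => x1 s + x2 s)} := cD cx1 cx2.
  have Hae : {ae (@lebesgue_measure R), forall s, s \in `]0, T] ->
      `|h1 s + h2 s| <= 1 * `|x1 s + x2 s|}.
    apply: aeW => s; rewrite in_itv /= => /andP[s0 sT].
    have [h1' h2' h3' h4'] := ab s (inI s (ltW s0) sT).
    have -> : h1 s + h2 s = ((a1 s + a2 s) / 2) * (- (x1 s + x2 s)).
      by rewrite /h1 /h2 /xibar; field.
    by rewrite mul1r -(normrN (x1 s + x2 s)); apply: nbound; lra.
  have Z := @zp_ode R T _ _ 0 T 1 oS (lexx 0) (ltW T0) (lexx T) ler01 cS Hae.
  move=> s sI; rewrite ltNge; apply/negP => Sle.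
  have [s0 sT] := outI s sI.
  have S0 : 0 <= x1 0 + x2 0 by have := xb0; rewrite /xibar; lra.
  have [z [z0 zs Sz]] := @ivt_down R (fun s => x1 s + x2 s) 0 s s0
    (@csub R _ 0 T 0 s cS (lexx 0) sT) S0 Sle.
  have := Z z z0 (le_trans zs sT) Sz 0 (lexx 0) (ltW T0).
  have := xb0; rewrite /xibar; lra.
have xbp : forall s, s \in `[0, T] -> 0 < xibar x1 x2 s.
  by move=> s sI; have := Spos s sI; rewrite /xibar; lra.
have sign : {ae (@lebesgue_measure R), forall s, s \in `[0, T] ->
    [/\ 0 < l1 s -> a1 s = 1, l1 s < 0 -> a1 s = 0,
        0 < l2 s -> a2 s = 1 & l2 s < 0 -> a2 s = 0]}.
  apply: (filterS _ pmp) => s Hs sI.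
  have [h1' h2' h3' h4'] := ab s sI.
  have key : forall b1 b2, 0 <= b1 -> b1 <= 1 -> 0 <= b2 -> b2 <= 1 ->
      b1 * l1 s + b2 * l2 s <= a1 s * l1 s + a2 s * l2 s.
    move=> b1 b2 hb1 hb1' hb2 hb2'.
    have := Hs sI b1 b2 _ _ _.
    rewrite ler_nM2l; last by rewrite oppr_lt0; exact: xbp.
    apply; [by rewrite hb1 hb1'|by rewrite hb2 hb2'|lra].
  split => hl.
  - have := key 1 (a2 s) ler01 (lexx 1) h3' h4'; nra.
  - have := key 0 (a2 s) (lexx 0) ler01 h3' h4'; nra.
  - have := key (a1 s) 1 h1' h2' ler01 (lexx 1); nra.
  - have := key (a1 s) 0 h1' h2' (lexx 0) ler01; nra.
have x1Tp : 0 < l1 T.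
  rewrite l1T; have TI := inI T (ltW T0) (lexx T).
  have := Spos T TI; have := x2x1 T TI; lra.
have ler02 : (0 : R) <= 2 by lra.
split.
- move=> l2p t tI; have [t0' tT] := outI t tI.
  have [/andP[p1 p2] //|] := boolP ((0 < l1 t) && (0 < l2 t)).
  rewrite negb_and -!leNgt => hneg.
  pose m := fun s => Num.min (l1 s) (l2 s).
  have cm : {within `[0, T], continuous m} := cMin cl1 cl2.
  have mt : m t <= 0 by rewrite /m ge_min.
  have mT : 0 < m T by rewrite /m lt_min x1Tp l2p.
  have [t0 [c0 cT z hp]] := @last_zero R m 0 T t cm t0' tT mt mT.
  have hp' : forall s, t0 < s -> s <= T -> 0 < l1 s /\ 0 < l2 s.
    by move=> s h1' h2'; have := hp s h1' h2'; rewrite /m lt_min => /andP.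
  have Hae1 : {ae (@lebesgue_measure R), forall s, s \in `]t0, T] ->
      `|g1 s| <= 1 * `|l1 s|}.
    apply: (filterS _ sign) => s sg; rewrite in_itv /= => /andP[cs sT].
    have sIn := inI s (ltW (le_lt_trans c0 cs)) sT.
    have [A1 _ A2 _] := sg sIn; have [p1 p2] := hp' s cs sT.
    rewrite /g1 (A1 p1) (A2 p2) subrr mul0r mul0r subr0 mul1r.
    by apply: nbound; lra.
  have Hae2 : {ae (@lebesgue_measure R), forall s, s \in `]t0, T] ->
      `|g2 s| <= 1 * `|l2 s|}.
    apply: (filterS _ sign) => s sg; rewrite in_itv /= => /andP[cs sT].
    have sIn := inI s (ltW (le_lt_trans c0 cs)) sT.
    have [A1 _ A2 _] := sg sIn; have [p1 p2] := hp' s cs sT.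
    rewrite /g2 (A1 p1) (A2 p2) subrr mul0r mul0r subr0 mul1r.
    by apply: nbound; lra.
  have Z1 := @zp_ode R T _ _ t0 T 1 od1 c0 (ltW cT) (lexx T) ler01
    (@csub R _ 0 T t0 T cl1 c0 (lexx T)) Hae1.
  have Z2 := @zp_ode R T _ _ t0 T 1 od2 c0 (ltW cT) (lexx T) ler01
    (@csub R _ 0 T t0 T cl2 c0 (lexx T)) Hae2.
  have : 0 <= m t0 by rewrite z.
  rewrite le_min => /andP[q1 q2].
  have : m t0 <= 0 by rewrite z.
  rewrite ge_min => /orP[q|q].
  + have e : l1 t0 = 0 by lra.
    have := Z1 t0 (lexx t0) (ltW cT) e T (ltW cT) (lexx T); lra.
  + have e : l2 t0 = 0 by lra.
    have := Z2 t0 (lexx t0) (ltW cT) e T (ltW cT) (lexx T); lra.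
- move=> l2z.
  have aux : forall c, 0 <= c -> c <= T ->
      (forall s, c < s -> s <= T -> 0 < l1 s) ->
      forall s, c <= s -> s <= T -> l2 s = 0.
    move=> c c0 cT hp.
    apply: (@zp_ode R T _ _ c T 1 od2 c0 cT (lexx T) ler01
      (@csub R _ 0 T c T cl2 c0 (lexx T)) _ T cT (lexx T) l2z).
    apply: (filterS _ sign) => s sg; rewrite in_itv /= => /andP[cs sT].
    have sIn := inI s (ltW (le_lt_trans c0 cs)) sT.
    have [A1 _ _ _] := sg sIn; have [_ _ h3' h4'] := ab s sIn.
    rewrite /g2 (A1 (hp s cs sT)) subrr mul0r mul0r subr0 mul1r.
    by apply: nbound; lra.
  have l1pos : forall t, t \in `[0, T] -> 0 < l1 t.
    move=> t tI; rewrite ltNge; apply/negP => lt.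
    have [t0' tT] := outI t tI.
    have [t0 [c0 cT z hp]] := @last_zero R l1 0 T t cl1 t0' tT lt x1Tp.
    have l2z' := aux t0 c0 (ltW cT) hp.
    have Hae1 : {ae (@lebesgue_measure R), forall s, s \in `]t0, T] ->
        `|g1 s| <= 1 * `|l1 s|}.
      apply: (filterS _ sign) => s _; rewrite in_itv /= => /andP[cs sT].
      have sIn := inI s (ltW (le_lt_trans c0 cs)) sT.
      have [h1' h2' _ _] := ab s sIn.
      rewrite /g1 (l2z' s (ltW cs) sT) mulr0 subr0 mul1r.
      by apply: nbound; lra.
    have := @zp_ode R T _ _ t0 T 1 od1 c0 (ltW cT) (lexx T) ler01
      (@csub R _ 0 T t0 T cl1 c0 (lexx T)) Hae1 t0 (lexx t0) (ltW cT) z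
      T (ltW cT) (lexx T).
    lra.
  move=> t tI; split; first exact: l1pos.
  have [t0 tT] := outI t tI.
  apply: (aux 0 (lexx 0) (ltW T0)) => // s s0 sT.
  exact: l1pos s (inI s (ltW s0) sT).
- move=> l2n.
  have oD := odeB od2 od1.
  have cDf := cB cl2 cl1.
  have HaeD : {ae (@lebesgue_measure R), forall s, s \in `]0, T] ->
      `|g2 s - g1 s| <= 1 * `|l2 s - l1 s|}.
    apply: aeW => s _.
    have -> : g2 s - g1 s = l2 s - l1 s by rewrite /g1 /g2; field.
    by rewrite mul1r.
  have ZD := @zp_ode R T _ _ 0 T 1 oD (lexx 0) (ltW T0) (lexx T) ler01 cDf HaeD.
  have Dneg : forall s, s \in `[0, T] -> l2 s - l1 s < 0.
    move=> s sI; rewrite ltNge; apply/negP => Ds.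
    have [s0 sT] := outI s sI.
    have DT : l2 T - l1 T <= 0 by lra.
    have [z [z0 zs Dz]] := @ivt_down R (fun s => l2 s - l1 s) s T sT
      (@csub R _ 0 T s T cDf s0 (lexx T)) Ds DT.
    have := ZD z (le_trans s0 z0) zs Dz T (ltW T0) (lexx T); lra.
  have Hae2 : {ae (@lebesgue_measure R), forall s, s \in `]0, T] ->
      `|g2 s| <= 2 * `|l2 s|}.
    apply: (filterS _ sign) => s sg; rewrite in_itv /= => /andP[cs sT].
    have sIn := inI s (ltW cs) sT.
    have [A1 _ _ _] := sg sIn; have [h1' h2' h3' h4'] := ab s sIn.
    have Ds := Dneg s sIn.
    have [p1|p1] := ltP 0 (l1 s).
    + rewrite /g2 (A1 p1) subrr mul0r mul0r subr0.
      apply: le_trans (_ : `|l2 s| <= _); first by apply: nbound; lra.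
      have := normr_ge0 (l2 s); lra.
    + have l2n' : l2 s < 0 by lra.
      rewrite (ltr0_norm l2n') ler_norml /g2; apply/andP; split; nra.
  have Z2 := @zp_ode R T _ _ 0 T 2 od2 (lexx 0) (ltW T0) (lexx T) ler02 cl2 Hae2.
  move=> t tI; rewrite ltNge; apply/negP => lt.
  have [t0 tT] := outI t tI.
  have [z [z0 zs Lz]] := @ivt_down R l2 t T tT
      (@csub R _ 0 T t T cl2 t0 (lexx T)) lt (ltW l2n).
  have := Z2 z (le_trans t0 z0) zs Lz T (ltW T0) (lexx T); lra.
Qed.
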